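(* Let $\Lambda$ be a left cancellative small category which is (isomorphic to) a subcategory of a groupoid. Then the groupoid $G_2(\Lambda)$ is Hausdorff.
   Context: A left cancellative small category (LCSC) is a small category $\Lambda$ such that $\alpha\beta=\alpha\gamma$ implies $\beta=\gamma$. Composition $\alpha\beta$ is defined when $s(\alpha)=r(\beta)$; $\Lambda^0$ is the set of objects (identity morphisms); $v\Lambda=\{\alpha:r(\alpha)=v\}$; $\alpha\Lambda=\{\alpha\beta:r(\beta)=s(\alpha)\}$. For $\alpha\in\Lambda$, $\tau^\alpha(\beta)=\alpha\beta$ on $s(\alpha)\Lambda$ and $\sigma^\alpha:\alpha\Lambda\to s(\alpha)\Lambda$ is its inverse. A zigzag is a tuple $\zeta=(\alpha_1,\beta_1,\dots,\alpha_n,\beta_n)$ with $r(\alpha_i)=r(\beta_i)$ and $s(\alpha_{i+1})=s(\beta_i)$; $\mathcal Z$ is the set of zigzags, $s(\zeta)=s(\beta_n)$, $r(\zeta)=s(\alpha_1)$, $\mathcal Zv=\{\zeta:s(\zeta)=v\}$, $\overline\zeta=(\beta_n,\alpha_n,\dots,\beta_1,\alpha_1)$, composable zigzags concatenate as tuples. The zigzag map $\varphi_\zeta=\sigma^{\alpha_1}\circ\tau^{\beta_1}\circ\cdots\circ\sigma^{\alpha_n}\circ\tau^{\beta_n}$ (partial injective map) has domain $A(\zeta)\subseteq s(\zeta)\Lambda$ and range $A(\overline\zeta)$. $\mathcal D^{(0)}_v$ is the set of nonempty $A(\zeta)$, $\zeta\in\mathcal Zv$; $\mathcal A_v$ is the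 ring of subsets of $v\Lambda$ generated by $\mathcal D^{(0)}_v$. $X_v$ is the set of ultrafilters of $\mathcal A_v$ ($\mathcal U_x$ denoting the ultrafilter $x$), with compact open basic sets $\widehat E=\{x:E\in\mathcal U_x\}$, $E\in\mathcal A_v$; $X=\bigsqcup_vX_v$, $r(x)=v$ for $x\in X_v$. For $x\in\widehat{A(\zeta)}$, $\Phi_\zeta(x)$ is the ultrafilter of $\mathcal A_{r(\zeta)}$ generated by $\{\varphi_\zeta(E\cap A(\zeta)):E\in\mathcal U_x\}$. On $\mathcal Z*X=\{(\zeta,x):s(\zeta)=r(x),\ x\in\widehat{A(\zeta)}\}$, $(\zeta,x)\sim_2(\zeta',x')$ iff $x=x'$ and $\varphi_\zeta|_E=\varphi_{\zeta'}|_E$ for some $E\in\mathcal U_x$. $G_2(\Lambda)=(\mathcal Z*X)/\sim_2$, with classes $[\zeta,x]$, product $[\zeta,\Phi_{\zeta'}(x)][\zeta',x]=[\zeta\zeta',x]$, inverse $[\zeta,x]^{-1}=[\overline\zeta,\Phi_\zeta(x)]$, and topology generated by the basis $[\zeta,E]=\{[\zeta,x]:x\in\widehat E\}$, $E\in\mathcal A_{s(\zeta)}$, $E\subseteq A(\zeta)$; it is an ample étale groupoid. *)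

(* Defs.v *)
From Stdlib Require Import List.
Import ListNotations.
Set Implicit Arguments.

(** Composition [comp a b] = "a b" is total
    as a function but only meaningful when [src a = rng b]. *)
Record LCSC := {
  Obj : Type;
  Mor : Type;
  src : Mor -> Obj;
  rng : Mor -> Obj;
  idm : Obj -> Mor;
  comp : Mor -> Mor -> Mor;
  src_idm : forall v, src (idm v) = v;
  rng_idm : forall v, rng (idm v) = v;
  src_comp : forall a b, src a = rng b -> src (comp a b) = src b;
  rng_comp : forall a b, src a = rng b -> rng (comp a b) = rng a;
  comp_idl : forall a, comp (idm (rng a)) a = a;
  comp_idr : forall a, comp a (idm (src a)) = a;
  comp_assoc : forall a b c, src a = rng b -> src b = rng c ->
      comp (comp a b) c = comp a (comp b c);
  left_cancel : forall a b c, src a = rng b -> src a = rng c ->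
      comp a b = comp a c -> b = c
}.

Arguments src {_} _.
Arguments rng {_} _.
Arguments idm {_} _.
Arguments comp {_} _ _.

Record Groupoid := {
  GObj : Type;
  GMor : Type;
  gsrc : GMor -> GObj;
  grng : GMor -> GObj;
  gidm : GObj -> GMor;
  gcomp : GMor -> GMor -> GMor;
  ginv : GMor -> GMor;
  gsrc_idm : forall v, gsrc (gidm v) = v;
  grng_idm : forall v, grng (gidm v) = v;
  gsrc_comp : forall a b, gsrc a = grng b -> gsrc (gcomp a b) = gsrc b;
  grng_comp : forall a b, gsrc a = grng b -> grng (gcomp a b) = grng a;
  gcomp_idl : forall a, gcomp (gidm (grng a)) a = a;
  gcomp_idr : forall a, gcomp a (gidm (gsrc a)) = a;
  gcomp_assoc : forall a b c, gsrc a = grng b -> gsrc b = grng c ->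
      gcomp (gcomp a b) c = gcomp a (gcomp b c);
  gsrc_inv : forall a, gsrc (ginv a) = grng a;
  grng_inv : forall a, grng (ginv a) = gsrc a;
  ginv_l : forall a, gcomp (ginv a) a = gidm (gsrc a);
  ginv_r : forall a, gcomp a (ginv a) = gidm (grng a)
}.

Arguments gsrc {_} _.
Arguments grng {_} _.
Arguments gidm {_} _.
Arguments gcomp {_} _ _.

(** [L] is isomorphic to a subcategory of a groupoid: there is a functor
    into a groupoid which is injective on objects and on morphisms. *)
Definition embeds_in_groupoid (L : LCSC) : Prop :=
  exists (G : Groupoid) (F0 : Obj L -> GObj G) (F1 : Mor L -> GMor G),
    (forall a, gsrc (F1 a) = F0 (src a)) /\
    (forall a, grng (F1 a) = F0 (rng a)) /\
    (forall v, F1 (idm v) = gidm (F0 v)) /\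
    (forall a b, src a = rng b -> F1 (comp a b) = gcomp (F1 a) (F1 b)) /\
    (forall v w, F0 v = F0 w -> v = w) /\
    (forall a b, F1 a = F1 b -> a = b).

Section Zigzags.
Variable L : LCSC.
Notation Mor := (Mor L).
Notation Obj := (Obj L).

(** [Zig z u w]: z = (α1,β1,...,αn,βn), n >= 1, is a zigzag with
    r(z) = s(α1) = u and s(z) = s(βn) = w. *)
Inductive Zig : list (Mor * Mor) -> Obj -> Obj -> Prop :=
| zig1 : forall a b, rng a = rng b -> Zig [(a, b)] (src a) (src b)
| zigS : forall a b z w, rng a = rng b -> Zig z (src b) w ->
    Zig ((a, b) :: z) (src a) w.

(** Graph of the zigzag map φ_z = σ^{α1} ∘ τ^{β1} ∘ ... ∘ σ^{αn} ∘ τ^{βn}: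
    [Phi z g d] means φ_z(g) = d. *)
Fixpoint Phi (z : list (Mor * Mor)) (g d : Mor) : Prop :=
  match z with
  | [] => g = d
  | (a, b) :: z' => exists e, Phi z' g e /\ src b = rng e /\
                      src a = rng d /\ comp a d = comp b e
  end.

Definition Adom (z : list (Mor * Mor)) : Mor -> Prop :=
  fun g => exists d, Phi z g d.

(** The ring of subsets of vΛ generated by D^(0)_v. *)
Inductive inA (v : Obj) : (Mor -> Prop) -> Prop :=
| inA_gen : forall z u, Zig z u v -> (exists g, Adom z g) -> inA v (Adom z)
| inA_union : forall E F, inA v E -> inA v F -> inA v (fun g => E g \/ F g)
| inA_diff : forall E F, inA v E -> inA v F -> inA v (fun g => E g /\ ~ F g).

Definition is_filter (v : Obj) (U : (Mor -> Prop) -> Prop) : Prop :=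
  (forall E, U E -> inA v E) /\
  (exists E, U E) /\
  (forall E, U E -> exists g, E g) /\
  (forall E F, U E -> U F -> U (fun g => E g /\ F g)) /\
  (forall E F, U E -> inA v F -> (forall g, E g -> F g) -> U F).

Definition is_ultrafilter (v : Obj) (U : (Mor -> Prop) -> Prop) : Prop :=
  is_filter v U /\
  (forall U', is_filter v U' -> (forall E, U E -> U' E) ->
     forall E, U' E -> U E).

End Zigzags.

Arguments Zig {L} _ _ _.
Arguments Phi {L} _ _ _.
Arguments Adom {L} _ _.
Arguments inA {L} _ _.
Arguments is_filter {L} _ _.
Arguments is_ultrafilter {L} _ _.

(** Elements of Z * X: a zigzag z, a point x = (v, U) of X_v with
    s(z) = v and x ∈ \hat{A(z)}. *)
Record ZX (L : LCSC) := {
  zx_z : list (Mor L * Mor L);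
  zx_v : Obj L;
  zx_U : (Mor L -> Prop) -> Prop;
  zx_zig : exists u, Zig zx_z u zx_v;
  zx_ultra : is_ultrafilter zx_v zx_U;
  zx_dom : zx_U (Adom zx_z)
}.

Arguments zx_z {_} _.
Arguments zx_v {_} _.
Arguments zx_U {_} _.

Definition sim2 (L : LCSC) (p q : ZX L) : Prop :=
  zx_v p = zx_v q /\ zx_U p = zx_U q /\
  exists E, zx_U p E /\
    forall g, E g -> forall d, Phi (zx_z p) g d <-> Phi (zx_z q) g d.

Definition G2 (L : LCSC) : Type :=
  { P : ZX L -> Prop | exists p, forall q, P q <-> sim2 p q }.

(** The basic sets [z, E], E ∈ A_{s(z)}, E ⊆ A(z). *)
Definition G2_basis {L : LCSC} (B : G2 L -> Prop) : Prop :=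
  exists z u v E, Zig z u v /\ inA v E /\ (forall g, E g -> Adom z g) /\
    forall c : G2 L, B c <->
      exists p : ZX L, zx_z p = z /\ zx_U p E /\ proj1_sig c p.

Definition open_gen {T : Type} (Bs : (T -> Prop) -> Prop) (W : T -> Prop) : Prop :=
  forall t, W t -> exists B, Bs B /\ B t /\ forall u, B u -> W u.

Definition hausdorff {T : Type} (Bs : (T -> Prop) -> Prop) : Prop :=
  forall x y : T, x <> y ->
    exists U V, open_gen Bs U /\ open_gen Bs V /\ U x /\ V y /\
      (forall t, U t -> V t -> False).

(* Main.v *)
Require Import Defs.
From Stdlib Require Import List Classical FunctionalExtensionality PropExtensionality ProofIrrelevance.
Import ListNotations.

Lemma pred_ext {T : Type} (P Q : T -> Prop) : (forall g, P g <-> Q g) -> P = Q.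
Proof. intro H; apply functional_extensionality; intro g; apply propositional_extensionality; auto. Qed.

Lemma inA_ext (L : LCSC) v (E F : Mor L -> Prop) : inA v E -> (forall g, E g <-> F g) -> inA v F.
Proof. intros H Heq; rewrite <- (@pred_ext _ E F Heq); exact H. Qed.

Lemma inA_int (L : LCSC) v (E F : Mor L -> Prop) : inA v E -> inA v F -> inA v (fun g => E g /\ F g).
Proof.
  intros HE HF.
  apply (@inA_ext L v (fun g => E g /\ ~ (E g /\ ~ F g))).
  - apply inA_diff; auto. apply inA_diff; auto.
  - intro g; split; [intros [H1 H2]; split; auto; apply NNPP; intro; apply H2; auto
                    | intros [H1 H2]; split; auto; intros [_ H3]; auto].
Qed.

Section U.
Context (L : LCSC) (v : Obj L) (U : (Mor L -> Prop) -> Prop) (HU : is_ultrafilter v U).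
Lemma uf_inA E : U E -> inA v E.
Proof. destruct HU as [[h _] _]; auto. Qed.
Lemma uf_ne E : U E -> exists g, E g.
Proof. destruct HU as [[_ [_ [h _]]] _]; auto. Qed.
Lemma uf_int E F : U E -> U F -> U (fun g => E g /\ F g).
Proof. destruct HU as [[_ [_ [_ [h _]]]] _]; auto. Qed.
End U.

Lemma uf_sep (L : LCSC) v (U U' : (Mor L -> Prop) -> Prop) :
  is_ultrafilter v U -> is_ultrafilter v U' -> U <> U' ->
  exists E F, U E /\ U' F /\ forall g, E g -> F g -> False.
Proof.
  intros HU HU' Hne.
  assert (exists E, U E /\ ~ U' E) as [E [HE HnE]].
  { apply NNPP; intro Hn. apply Hne.
    assert (Hsub : forall E, U E -> U' E).
    { intros E HE. apply NNPP; intro; apply Hn; eauto. }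
    apply pred_ext; intro E; split; auto.
    destruct HU as [_ Hmax]. apply Hmax; auto. exact (proj1 HU'). }
  exists E.
  apply NNPP; intro Hn.
  assert (Hmeet : forall F, U' F -> exists g, E g /\ F g).
  { intros F HF. apply NNPP; intro H2. apply Hn. exists F; split; [auto|split; [auto|]].
    intros g h1 h2; apply H2; eauto. }
  pose (U'' := fun G => inA v G /\ exists F, U' F /\ forall g, E g /\ F g -> G g).
  destruct HU' as [[f1 [f2 [f3 [f4 f5]]]] Hmax].
  assert (HF'' : is_filter v U'').
  { unfold is_filter, U''; split; [|split; [|split; [|split]]].
    - intros G [h _]; auto.
    - destruct f2 as [F0 HF0]. exists E; split. apply (@uf_inA _ _ _ HU _ HE).
      exists F0; split; auto. intros g [h _]; auto.
    - intros G [_ [F [HF HG]]]. destruct (Hmeet F HF) as [g Hg]; eauto.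
    - intros G1 G2 [i1 [F1 [HF1 H1]]] [i2 [F2 [HF2 H2]]]. split.
      apply inA_int; auto. exists (fun g => F1 g /\ F2 g); split; auto.
      intros g [h1 [h2 h3]]; split; auto.
    - intros G1 G2 [i1 [F1 [HF1 H1]]] i2 Hs. split; auto. exists F1; split; auto. }
  apply HnE. apply (Hmax U''); auto.
  - intros F HF. split; auto. exists F; split; auto. intros g [_ h]; auto.
  - split. apply (@uf_inA _ _ _ HU _ HE). destruct f2 as [F0 HF0]. exists F0; split; auto.
    intros g [h _]; auto.
Qed.

Arguments gsrc_idm {_} _. Arguments grng_idm {_} _. Arguments gsrc_comp {_} _ _ _. Arguments grng_comp {_} _ _ _.
Arguments gcomp_idl {_} _. Arguments gcomp_idr {_} _. Arguments gcomp_assoc {_} _ _ _ _ _.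
Arguments gsrc_inv {_} _. Arguments grng_inv {_} _. Arguments ginv_l {_} _. Arguments ginv_r {_} _.

Lemma gl1 (G : Groupoid) (a x : GMor G) : gsrc a = grng x -> gcomp (ginv G a) (gcomp a x) = x.
Proof.
  intro H. rewrite <- gcomp_assoc; [| rewrite gsrc_inv; auto | auto].
  rewrite ginv_l, H, gcomp_idl; auto.
Qed.

Lemma gcancel_r (G : Groupoid) (k1 k2 x : GMor G) : gsrc k1 = grng x -> gsrc k2 = grng x ->
  gcomp k1 x = gcomp k2 x -> k1 = k2.
Proof.
  intros h1 h2 He.
  rewrite <- (gcomp_idr k1), <- (gcomp_idr k2), h1, h2, <- (ginv_r x).
  rewrite <- !gcomp_assoc; try rewrite grng_inv; auto. rewrite He; auto.
Qed.

Lemma Zig_nil (L : LCSC) u w : ~ Zig (L:=L) [] u w.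
Proof. intro H; inversion H. Qed.

Lemma Zig_det (L : LCSC) z u w : Zig (L:=L) z u w -> forall u' w', Zig z u' w' -> w = w'.
Proof.
  induction 1; intros u' w' H'; inversion H'; subst; auto.
  - exfalso; eapply Zig_nil; eauto.
  - exfalso; eapply Zig_nil; eauto.
  - eauto.
Qed.

Fixpoint K (L : LCSC) (G : Groupoid) (F1 : Mor L -> GMor G) (d : GMor G)
  (z : list (Mor L * Mor L)) : GMor G :=
  match z with
  | [] => d
  | (a, b) :: z' => gcomp (ginv G (F1 a)) (gcomp (F1 b)
       (match z' with [] => gidm (gsrc (F1 b)) | _ => K L G F1 d z' end))
  end.
Arguments K {L G} F1 d z.

Lemma K_cons2 (L : LCSC) (G : Groupoid) (F1 : Mor L -> GMor G) d a b c z :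
  K F1 d ((a, b) :: c :: z) = gcomp (ginv G (F1 a)) (gcomp (F1 b) (K F1 d (c :: z))).
Proof. reflexivity. Qed.

Lemma K_one (L : LCSC) (G : Groupoid) (F1 : Mor L -> GMor G) d a b :
  K F1 d [(a, b)] = gcomp (ginv G (F1 a)) (F1 b).
Proof. simpl. rewrite gcomp_idr. reflexivity. Qed.

Section Emb.
Context (L : LCSC) (G : Groupoid) (F0 : Obj L -> GObj G) (F1 : Mor L -> GMor G)
  (hs : forall a, gsrc (F1 a) = F0 (src a))
  (hr : forall a, grng (F1 a) = F0 (rng a))
  (hc : forall a b, src a = rng b -> F1 (comp a b) = gcomp (F1 a) (F1 b))
  (hinj : forall a b, F1 a = F1 b -> a = b) (d0 : GMor G).

Lemma Kprops z u w : Zig z u w ->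
  gsrc (K F1 d0 z) = F0 w /\ grng (K F1 d0 z) = F0 u /\
  forall g dd, Phi z g dd -> rng g = w /\ F1 dd = gcomp (K F1 d0 z) (F1 g).
Proof.
  induction 1 as [a b Hab | a b z w Hab Hz IH].
  - rewrite K_one.
    assert (Hs1 : gsrc (ginv G (F1 a)) = grng (F1 b)) by (rewrite gsrc_inv, !hr; congruence).
    split; [rewrite gsrc_comp; auto|split; [rewrite grng_comp, grng_inv; auto|]].
    intros g dd [e [He [h1 [h2 h3]]]]. simpl in He; subst e.
    split; auto.
    rewrite gcomp_assoc; auto; [|rewrite hs, hr; auto].
    rewrite <- hc; auto. rewrite <- h3. rewrite hc; auto. rewrite gl1; auto.
    all: rewrite ?hs, ?hr; congruence.
  - destruct z as [|c z]; [exfalso; eapply Zig_nil; eauto|].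
    rewrite K_cons2. destruct IH as [IH1 [IH2 IH3]].
    assert (Hs1 : gsrc (ginv G (F1 a)) = grng (F1 b)) by (rewrite gsrc_inv, !hr; congruence).
    assert (Hs2 : gsrc (F1 b) = grng (K F1 d0 (c :: z))) by (rewrite hs; auto).
    assert (Hs3 : gsrc (ginv G (F1 a)) = grng (gcomp (F1 b) (K F1 d0 (c :: z)))) by (rewrite grng_comp; auto).
    split; [rewrite !gsrc_comp; auto|].
    split; [rewrite grng_comp, grng_inv; auto|].
    intros g dd [e [He [h1 [h2 h3]]]].
    destruct (IH3 g e He) as [Hg He'].
    split; auto.
    assert (Hs4 : gsrc (K F1 d0 (c :: z)) = grng (F1 g)) by (rewrite IH1, hr; congruence).
    assert (Hs5 : gsrc (gcomp (F1 b) (K F1 d0 (c :: z))) = grng (F1 g)) by (rewrite gsrc_comp; auto).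
    rewrite (gcomp_assoc (ginv G (F1 a))); auto.
    rewrite (gcomp_assoc (F1 b)); auto.
    rewrite <- He'. rewrite <- hc; auto. rewrite <- h3. rewrite hc; auto.
    rewrite gl1; auto. all: rewrite ?hs, ?hr; congruence.
Qed.

Lemma phi_eq z1 u1 w1 z2 u2 w2 g d1 d2 : Zig z1 u1 w1 -> Zig z2 u2 w2 ->
  Phi z1 g d1 -> Phi z2 g d2 -> (K F1 d0 z1 = K F1 d0 z2 <-> d1 = d2).
Proof.
  intros Z1 Z2 P1 P2.
  destruct (Kprops _ _ _ Z1) as [a1 [_ c1]]. destruct (Kprops _ _ _ Z2) as [a2 [_ c2]].
  destruct (c1 _ _ P1) as [r1 e1]. destruct (c2 _ _ P2) as [r2 e2].
  split.
  - intro HK. apply hinj. rewrite e1, e2, HK; auto.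
  - intro; subst d2. apply (@gcancel_r G _ _ (F1 g)).
    rewrite a1, hr; congruence. rewrite a2, hr; congruence. congruence.
Qed.
End Emb.

Arguments uf_inA {L v U} HU {E}. Arguments uf_int {L v U} HU {E F}. Arguments uf_ne {L v U} HU {E}.
Arguments uf_sep {L v U U'}. Arguments Zig_det {L z u w} _ {u' w'}.
Arguments phi_eq {L G F0 F1} hs hr hc hinj d0 {z1 u1 w1 z2 u2 w2 g d1 d2}.

Lemma sim2_refl (L : LCSC) (p : ZX L) : sim2 p p.
Proof. split; auto. split; auto. exists (Adom (zx_z p)); split. apply zx_dom. tauto. Qed.

Lemma sim2_sym (L : LCSC) (p q : ZX L) : sim2 p q -> sim2 q p.
Proof.
  intros [h1 [h2 [E [HE HE']]]]. split; auto. split; auto. exists E; split.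
  rewrite <- h2; auto. intros g Hg dd; symmetry; auto.
Qed.

Lemma sim2_trans (L : LCSC) (a b c : ZX L) : sim2 a b -> sim2 b c -> sim2 a c.
Proof.
  intros [h1 [h2 [E [HE HE']]]] [i1 [i2 [F [HF HF']]]].
  split; [congruence|split; [congruence|]].
  exists (fun g => E g /\ F g); split.
  - apply (@uf_int _ _ _ (zx_ultra a)); auto. rewrite h2; auto.
  - intros g [g1 g2] dd. rewrite HE'; auto.
Qed.

Definition Bset (L : LCSC) (p : ZX L) (E : Mor L -> Prop) : G2 L -> Prop :=
  fun c => exists p', zx_z p' = zx_z p /\ zx_U p' E /\ proj1_sig c p'.

Arguments Bset {L} p E. Arguments sim2_sym {L p q}. Arguments sim2_trans {L a b c}.

Lemma Bset_basis (L : LCSC) (p : ZX L) E : inA (zx_v p) E -> (forall g, E g -> Adom (zx_z p) g) ->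
  G2_basis (Bset p E).
Proof.
  intros HA HE. destruct (zx_zig p) as [u Hu].
  exists (zx_z p), u, (zx_v p), E. split; auto. split; auto. split; auto.
  intro c; unfold Bset; tauto.
Qed.

Lemma Bset_open (L : LCSC) (p : ZX L) E : inA (zx_v p) E -> (forall g, E g -> Adom (zx_z p) g) ->
  open_gen (@G2_basis L) (Bset p E).
Proof. intros HA HE t Ht. exists (Bset p E); split; auto. apply Bset_basis; auto. Qed.

Lemma sep (L : LCSC) (x y : G2 L) p q E F :
 proj1_sig x p -> proj1_sig y q ->
 inA (zx_v p) E -> zx_U p E -> (forall g, E g -> Adom (zx_z p) g) ->
 inA (zx_v q) F -> zx_U q F -> (forall g, F g -> Adom (zx_z q) g) ->
 (forall r p' q', sim2 r p' -> sim2 r q' -> zx_z p' = zx_z p -> zx_z q' = zx_z q ->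
     zx_U p' E -> zx_U q' F -> False) ->
 exists U V, open_gen (@G2_basis L) U /\ open_gen (@G2_basis L) V /\ U x /\ V y /\
   (forall t, U t -> V t -> False).
Proof.
  intros Hx Hy HA HE HEs HB HF HFs Hc.
  exists (Bset p E), (Bset q F).
  split; [apply Bset_open; auto|]. split; [apply Bset_open; auto|].
  split; [exists p; auto|]. split; [exists q; auto|].
  intros [R [r Hr]] [p' [e1 [u1 c1]]] [q' [e2 [u2 c2]]]. simpl in c1, c2.
  apply (Hc r p' q'); auto; apply Hr; auto.
Qed.

Arguments sep {L x y p q E F}.

Theorem mainTheorem7 (L : LCSC) :
  embeds_in_groupoid L -> hausdorff (@G2_basis L).
Proof.
  intros [G [F0 [F1 [hs [hr [hid [hc [h0 h1]]]]]]]].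
  intros [P [p Hp]] [Q [q Hq]] Hxy.
  assert (Hns : ~ sim2 p q).
  { intro Hs. apply Hxy.
    assert (P = Q). { apply pred_ext; intro r. rewrite Hp, Hq. split; intro H.
      apply (sim2_trans (sim2_sym Hs) H). apply (sim2_trans Hs H). }
    subst Q. f_equal. apply proof_irrelevance. }
  assert (HpP : proj1_sig (exist (fun P0 => exists p0, forall q0, P0 q0 <-> sim2 p0 q0) P (ex_intro _ p Hp)) p)
    by (simpl; apply Hp; apply sim2_refl).
  assert (HqQ : proj1_sig (exist (fun P0 => exists p0, forall q0, P0 q0 <-> sim2 p0 q0) Q (ex_intro _ q Hq)) q)
    by (simpl; apply Hq; apply sim2_refl).
  pose proof (zx_ultra p) as Up. pose proof (zx_ultra q) as Uq.
  assert (Ap : inA (zx_v p) (Adom (zx_z p))) by (apply (uf_inA Up), zx_dom).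
  assert (Aq : inA (zx_v q) (Adom (zx_z q))) by (apply (uf_inA Uq), zx_dom).
  destruct (classic (zx_v p = zx_v q)) as [Hv | Hv].
  2:{ apply (sep HpP HqQ Ap (zx_dom p) (fun g h => h) Aq (zx_dom q) (fun g h => h)).
      intros r p' q' [a1 _] [a2 _] e1 e2 _ _. apply Hv.
      destruct (zx_zig p') as [u1 Z1]. destruct (zx_zig q') as [u2 Z2].
      destruct (zx_zig p) as [u3 Z3]. destruct (zx_zig q) as [u4 Z4].
      rewrite e1 in Z1. rewrite e2 in Z2.
      rewrite (Zig_det Z3 Z1), (Zig_det Z4 Z2). congruence. }
  destruct (classic (zx_U p = zx_U q)) as [HU | HU].
  2:{ rewrite <- Hv in Uq. destruct (uf_sep Up Uq HU) as [E [F [HE [HF Hd]]]].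
      apply (sep (E := fun g => Adom (zx_z p) g /\ E g) (F := fun g => Adom (zx_z q) g /\ F g) HpP HqQ).
      - apply inA_int; auto. apply (uf_inA Up); auto.
      - apply (uf_int Up); auto. apply zx_dom.
      - intros g [h _]; auto.
      - apply inA_int; auto. rewrite <- Hv. apply (uf_inA Uq); auto.
      - apply (uf_int Uq); auto. apply zx_dom.
      - intros g [h _]; auto.
      - intros r p' q' [a1 [b1 _]] [a2 [b2 _]] e1 e2 k1 k2.
        rewrite <- b1 in k1. rewrite <- b2 in k2.
        destruct (uf_ne (zx_ultra r) (uf_int (zx_ultra r) k1 k2)) as [g [[_ g1] [_ g2]]].
        eauto. }
  destruct (zx_zig p) as [up Zp]. destruct (zx_zig q) as [uq Zq].
  set (d0 := gidm (F0 (zx_v p))).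
  destruct (classic (K F1 d0 (zx_z p) = K F1 d0 (zx_z q))) as [HK | HK].
  - exfalso. apply Hns. split; auto. split; auto.
    exists (fun g => Adom (zx_z p) g /\ Adom (zx_z q) g). split.
    + apply (uf_int Up). apply zx_dom. rewrite HU; apply zx_dom.
    + intros g [[d1 P1] [d2 P2]] dd. split; intro Pd.
      * assert (d2 = dd). { apply (phi_eq hs hr hc h1 d0 Zq Zp P2 Pd). auto. } subst; auto.
      * assert (d1 = dd). { apply (phi_eq hs hr hc h1 d0 Zp Zq P1 Pd). auto. } subst; auto.
  - apply (sep HpP HqQ Ap (zx_dom p) (fun g h => h) Aq (zx_dom q) (fun g h => h)).
    intros r p' q' s1 s2 e1 e2 k1 k2.
    destruct s1 as [a1 [b1 [E1 [HE1 HE1']]]]. destruct s2 as [a2 [b2 [E2 [HE2 HE2']]]].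
    rewrite <- b1 in k1.
    pose proof (uf_int (zx_ultra r) (uf_int (zx_ultra r) HE1 HE2) k1) as Hint.
    destruct (uf_ne (zx_ultra r) Hint) as [g [[g1 g2] [dd Pd]]].
    rewrite e1 in HE1'. rewrite e2 in HE2'.
    assert (P2 : Phi (zx_z q) g dd) by (apply HE2'; auto; apply HE1'; auto).
    apply HK. apply (phi_eq hs hr hc h1 d0 Zp Zq Pd P2). auto.
Qed.
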